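(* In the setting where delays are available at action time, run Skipper$(\beta,\mathrm{DEW}(\eta,\beta))$ tuned by the scheme Doubling described in the context. Then for every epoch $m$ that is not the final epoch, $$\mathrm{Bound}_m(\beta_m)\le 3\sqrt{\omega_m}\le 3\,\mathrm{Bound}_m(\beta_m^* )+2e^2K\ln K+1,$$ where $\beta_m^*\in\arg\min_{\beta>0}\mathrm{Bound}_m(\beta)$.
   Context: Setting: fix integers $K\ge 2$, $T\ge 1$, $[K]=\{1,\dots,K\}$. An oblivious adversary fixes in advance losses $\ell_t^a\in[0,1]$ and nonnegative integer delays $d_t$. In each round $t$ the delay $d_t$ is revealed to the learner at the beginning of the round (delay available at action time); the learner then picks (possibly at random) $A_t\in[K]$, suffers $\ell_t^{A_t}$, and at the end of round $t$ observes the pairs $(s,\ell_s^{A_s})$ for all $s\le t$ with $s+d_s=t$. Algorithm DEW with inputs $\eta>0$ and $d_{\max}$: $\eta'=\min\{\eta,(4e\,d_{\max})^{-1}\}$, $w_0^a=1$; in round $t$ play $A_t\sim p_t$ with $p_t^a=w_{t-1}^a/\sum_b w_{t-1}^b$; at the end of the round, for each received pair $(s,\ell_s^{A_s})$ form $\hat\ell_s^a=\ell_s^a\mathbb 1(a=A_s)/p_s^a$ and update $w_t^a=w_{t-1}^a\exp(-\eta'\sum_s\hat\ell_s^a)$ (sum over pairs received in round $t$). Skipper$(\beta,\mathcal A)$ plays the actions of the base algorithm $\mathcal A$ and forwards to $\mathcal A$ only the pairs $(s,\ell_s^{A_s})$ with $d_s<\beta$. Skipper$(\beta,\mathrm{DEW}(\eta,\beta))$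 uses DEW with learning rate $\eta$ and $d_{\max}=\beta$. Doubling: rounds are partitioned into consecutive epochs indexed by $m$, with $\omega_m=2^m$, $\beta_m=\sqrt{\omega_m}/(4e\ln K)$ and $\eta_m=1/(4e\beta_m)$; in each epoch a fresh copy of Skipper$(\beta_m,\mathrm{DEW}(\eta_m,\beta_m))$ is run. For epoch $m$ let $\sigma(m)$ be its number of rounds, $S^m_\beta$ the set of its rounds with $d_t\ge\beta$, and $D^m_\beta$ the sum of $d_t$ over its rounds with $d_t<\beta$. At the beginning of each round $t$, after $d_t$ is revealed, the algorithm stays in the current epoch $m$ if, with round $t$ included in epoch $m$, $$\max\Big\{|S^m_{\beta_m}|^2,\ \Big(\tfrac{eK\sigma(m)}{2}+D^m_{\beta_m}\Big)\ln K\Big\}\le\omega_m;$$ otherwise a new epoch (with a larger index) is started at round $t$, before $A_t$ is selected. For an epoch $m$ define $$\mathrm{Bound}_m(\beta)=|S^m_\beta|+4e\beta\ln K+\frac{\sigma(m)eK/2+D^m_\beta}{4e\beta}.$$ *)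

(* Defs.v *)
From Stdlib Require Import Reals Lra Lia.
Open Scope R_scope.

(* Rounds are numbered 1..T; an epoch is a block of consecutive rounds
   [a, b) = {a, ..., b-1}.  Delays are a sequence d : nat -> nat
   (d t = delay of round t), fixed in advance by the oblivious adversary. *)

Fixpoint sumR (f : nat -> R) (a n : nat) : R :=
  match n with
  | O => 0
  | S n' => f a + sumR f (S a) n'
  end.

Definition sigma_ep (a b : nat) : R := INR (b - a).

Definition S_card (d : nat -> nat) (a b : nat) (beta : R) : R :=
  sumR (fun t => if Rle_dec beta (INR (d t)) then 1 else 0) a (b - a).

Definition D_sum (d : nat -> nat) (a b : nat) (beta : R) : R :=
  sumR (fun t => if Rlt_dec (INR (d t)) beta then INR (d t) else 0) a (b - a).

Definition omega (m : nat) : R := 2 ^ m.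
Definition beta_m (K : nat) (m : nat) : R := sqrt (omega m) / (4 * exp 1 * ln (INR K)).
Definition eta_m (K : nat) (m : nat) : R := / (4 * exp 1 * beta_m K m).

Definition stay_cond (K : nat) (d : nat -> nat) (a b m : nat) : Prop :=
  Rmax ((S_card d a b (beta_m K m)) ^ 2)
       ((exp 1 * INR K * sigma_ep a b / 2 + D_sum d a b (beta_m K m)) * ln (INR K))
  <= omega m.

Definition Bound (K : nat) (d : nat -> nat) (a b : nat) (beta : R) : R :=
  S_card d a b beta + 4 * exp 1 * beta * ln (INR K)
  + (sigma_ep a b * exp 1 * INR K / 2 + D_sum d a b beta) / (4 * exp 1 * beta).

(* A run of Doubling on rounds 1..T with delays d: n epochs, epoch j
   occupies rounds [start j, start (j+1)) and has index idx j. *)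
Definition doubling_run (K T : nat) (d : nat -> nat) (n : nat)
    (start idx : nat -> nat) : Prop :=
  (1 <= n)%nat /\
  start 0%nat = 1%nat /\
  start n = S T /\
  (forall j, (j < n)%nat -> (start j < start (S j))%nat) /\
  (forall j, (S j < n)%nat -> (idx j < idx (S j))%nat) /\
  (* inside an epoch: at every round t of epoch j (including its first
     round) the condition, with round t included, holds *)
  (forall j t, (j < n)%nat -> (start j <= t < start (S j))%nat ->
     stay_cond K d (start j) (S t) (idx j)) /\
  (* a new epoch is started at round start (S j) because including that
     round in epoch j would violate the condition *)
  (forall j, (S j < n)%nat ->
     ~ stay_cond K d (start j) (S (start (S j))) (idx j)).

(* Main.v *)
Require Import Defs.
From Stdlib Require Import Reals Lra Lia Psatz.
Open Scope R_scope.

Lemma sumR_snoc f n : forall a, sumR f a (S n) = sumR f a n + f (a + n)%nat.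
Proof.
  induction n as [|n IH]; intro a.
  - simpl. rewrite Nat.add_0_r. ring.
  - change (sumR f a (S (S n))) with (f a + sumR f (S a) (S n)).
    rewrite IH. replace (S a + n)%nat with (a + S n)%nat by lia. simpl. ring.
Qed.

Lemma sumR_mono f g n : forall a, (forall t, f t <= g t) -> sumR f a n <= sumR g a n.
Proof. induction n as [|n IH]; intros a H; simpl; [lra|]. specialize (IH (S a) H). specialize (H a). lra. Qed.

Lemma sumR_plus f g n : forall a, sumR (fun t => f t + g t) a n = sumR f a n + sumR g a n.
Proof. induction n as [|n IH]; intros a; simpl; [lra|]. rewrite IH. ring. Qed.

Lemma sumR_scal c f n : forall a, sumR (fun t => c * f t) a n = c * sumR f a n.
Proof. induction n as [|n IH]; intros a; simpl; [lra|]. rewrite IH. ring. Qed.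

Lemma sumR_zero n : forall a, sumR (fun _ => 0) a n = 0.
Proof. induction n as [|n IH]; intro x; simpl; [lra|]. rewrite IH. lra. Qed.

Lemma S_card_ge0 d a b beta : 0 <= S_card d a b beta.
Proof.
  unfold S_card. eapply Rle_trans; [right; symmetry; apply (sumR_zero (b - a) a)|].
  apply sumR_mono. intro t. destruct Rle_dec; lra.
Qed.

Lemma D_sum_ge0 d a b beta : 0 <= D_sum d a b beta.
Proof.
  unfold D_sum. eapply Rle_trans; [right; symmetry; apply (sumR_zero (b - a) a)|].
  apply sumR_mono. intro t. destruct Rlt_dec; [apply pos_INR|lra].
Qed.

Lemma S_card_snoc d a b beta : (a <= b)%nat ->
  S_card d a (S b) beta = S_card d a b beta + (if Rle_dec beta (INR (d b)) then 1 else 0).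
Proof.
  intro H. unfold S_card. replace (S b - a)%nat with (S (b - a)) by lia.
  rewrite sumR_snoc. replace (a + (b - a))%nat with b by lia. reflexivity.
Qed.

Lemma D_sum_snoc d a b beta : (a <= b)%nat ->
  D_sum d a (S b) beta = D_sum d a b beta + (if Rlt_dec (INR (d b)) beta then INR (d b) else 0).
Proof.
  intro H. unfold D_sum. replace (S b - a)%nat with (S (b - a)) by lia.
  rewrite sumR_snoc. replace (a + (b - a))%nat with b by lia. reflexivity.
Qed.

Lemma sigma_snoc a b : (a <= b)%nat -> sigma_ep a (S b) = sigma_ep a b + 1.
Proof.
  intro H. unfold sigma_ep. replace (S b - a)%nat with (S (b - a)) by lia.
  rewrite S_INR. reflexivity.
Qed.

Lemma S_card_anti d a b b1 b2 : b1 <= b2 -> S_card d a b b2 <= S_card d a b b1.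
Proof.
  intro H. unfold S_card. apply sumR_mono. intro t.
  destruct Rle_dec; destruct Rle_dec; lra.
Qed.

Lemma D_sum_cmp d a b b1 b2 : 0 < b1 -> b1 <= b2 ->
  D_sum d a b b2 <= D_sum d a b b1 + b2 * S_card d a b b1.
Proof.
  intros H0 H. unfold D_sum, S_card. rewrite <- sumR_scal, <- sumR_plus.
  apply sumR_mono. intro t. pose proof (pos_INR (d t)).
  destruct (Rlt_dec (INR (d t)) b2); destruct (Rlt_dec (INR (d t)) b1);
  destruct (Rle_dec b1 (INR (d t))); lra.
Qed.

Lemma ln_half_lt : 1/2 < ln 2.
Proof.
  assert (H : exp (1/2) < 2).
  { assert (E : exp (1/2) * exp (1/2) = exp 1) by (rewrite <- exp_plus; f_equal; lra).
    pose proof exp_le_3. pose proof (exp_pos (1/2)). nra. }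
  rewrite <- (ln_exp (1/2)). apply ln_increasing; [apply exp_pos | exact H].
Qed.

Theorem lemma5 (K T : nat) (d : nat -> nat) (n : nat) (start idx : nat -> nat) :
  (2 <= K)%nat -> (1 <= T)%nat ->
  doubling_run K T d n start idx ->
  forall j : nat, (S j < n)%nat ->
    let a := start j in
    let b := start (S j) in
    let m := idx j in
    Bound K d a b (beta_m K m) <= 3 * sqrt (omega m) /\
    (forall beta_star : R,
       0 < beta_star ->
       (forall beta : R, 0 < beta -> Bound K d a b beta_star <= Bound K d a b beta) ->
       3 * sqrt (omega m)
       <= 3 * Bound K d a b beta_star + 2 * (exp 1) ^ 2 * INR K * ln (INR K) + 1).
Proof.
  intros HK HT [Hn [H0 [Hend [Hinc [Hidx [Hstay Hnot]]]]]] j Hj a b m.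
  assert (Hab : (a < b)%nat) by (apply Hinc; lia).
  assert (Hst : stay_cond K d a b m).
  { assert (H := Hstay j (b - 1)%nat ltac:(lia) ltac:(unfold a, b in *; lia)).
    replace (S (b - 1)) with b in H by lia. exact H. }
  assert (Hns := Hnot j Hj). fold a b m in Hns.
  set (E := exp 1). set (Kr := INR K). set (L := ln Kr). set (w := omega m).
  set (sw := sqrt w).
  assert (HE2 : 2 < E) by (unfold E; pose proof (exp_ineq1 1); lra).
  assert (HKr : 2 <= Kr) by (unfold Kr; replace 2 with (INR 2) by (simpl; lra); apply le_INR; lia).
  assert (HL : 1/2 < L).
  { pose proof ln_half_lt. unfold L. destruct (Rle_lt_or_eq_dec 2 Kr HKr) as [h|h].
    - pose proof (ln_increasing 2 Kr ltac:(lra) h). lra.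
    - rewrite <- h. lra. }
  assert (Hw : 1 <= w) by (unfold w, omega; apply pow_R1_Rle; lra).
  assert (Hsw : 1 <= sw) by (unfold sw; rewrite <- sqrt_1; apply sqrt_le_1_alt; lra).
  assert (Hsww : sw * sw = w) by (unfold sw; apply sqrt_sqrt; lra).
  assert (Hbm : beta_m K m = sw / (4 * E * L)) by reflexivity.
  assert (Hbmpos : 0 < beta_m K m) by (rewrite Hbm; apply Rdiv_lt_0_compat; nra).
  assert (HbmL : 4 * E * beta_m K m * L = sw) by (rewrite Hbm; field; nra).
  unfold stay_cond in Hst, Hns. fold E Kr L w in Hst, Hns.
  split.
  - unfold Bound. fold E Kr L.
    set (S0 := S_card d a b (beta_m K m)) in *.
    set (D0 := D_sum d a b (beta_m K m)) in *.
    set (s := sigma_ep a b) in *.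
    assert (h1 : S0 ^ 2 <= w) by (eapply Rle_trans; [apply Rmax_l|exact Hst]).
    assert (h2 : (E * Kr * s / 2 + D0) * L <= w) by (eapply Rle_trans; [apply Rmax_r|exact Hst]).
    assert (hS0 : 0 <= S0) by apply S_card_ge0.
    assert (h3 : S0 <= sw) by nra.
    assert (h4 : (s * E * Kr / 2 + D0) / (4 * E * beta_m K m) = (E * Kr * s / 2 + D0) * L / sw)
      by (rewrite Hbm; field; nra).
    rewrite h4.
    assert (h5 : (E * Kr * s / 2 + D0) * L / sw <= sw).
    { apply (Rmult_le_reg_r sw); [lra|]. unfold Rdiv. rewrite Rmult_assoc, Rinv_l; lra. }
    lra.
  - intros bs Hbs _.
    unfold Bound. fold E Kr L.
    set (Ss := S_card d a b bs). set (Ds := D_sum d a b bs). set (s := sigma_ep a b).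
    assert (hSs : 0 <= Ss) by apply S_card_ge0.
    assert (hDs : 0 <= Ds) by apply D_sum_ge0.
    assert (hs : 0 <= s) by (unfold s, sigma_ep; apply pos_INR).
    set (Y := s * E * Kr / 2 + Ds).
    assert (hY : 0 <= Y).
    { unfold Y. assert (0 <= s * E * Kr) by (apply Rmult_le_pos; [apply Rmult_le_pos|]; lra). lra. }
    assert (hq : 0 <= Y / (4 * E * bs)) by (unfold Rdiv; apply Rmult_le_pos; [lra|]; left; apply Rinv_0_lt_compat; nra).
    assert (hKL : 1 <= Kr * L) by nra.
    assert (hEE : 4 <= E * E) by nra.
    assert (hEKL : 4 <= E * E * (Kr * L)) by nra.
    destruct (Rle_lt_dec (beta_m K m) bs) as [hb|hb].
    + assert (4 * E * beta_m K m * L <= 4 * E * bs * L) by nra.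
      nra.
    + assert (hc : Rmax (S_card d a (S b) (beta_m K m) ^ 2)
               ((E * Kr * sigma_ep a (S b) / 2 + D_sum d a (S b) (beta_m K m)) * L) > w)
        by lra.
      rewrite S_card_snoc, D_sum_snoc, sigma_snoc in hc by lia.
      assert (hSm := S_card_anti d a b bs (beta_m K m) ltac:(lra)). fold Ss in hSm.
      unfold Rmax in hc. destruct Rle_dec as [_|_].
      * (* D case *)
        set (D0 := D_sum d a b (beta_m K m)) in *.
        assert (hd : (if Rlt_dec (INR (d b)) (beta_m K m) then INR (d b) else 0) <= beta_m K m)
          by (destruct Rlt_dec; lra).
        assert (hDc := D_sum_cmp d a b bs (beta_m K m) Hbs ltac:(lra)). fold Ds Ss D0 in hDc.
        assert (hq2 : Y / (4 * E * beta_m K m) <= Y / (4 * E * bs)).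
        { unfold Rdiv. apply Rmult_le_compat_l; [lra|]. apply Rinv_le_contravar; nra. }
        assert (hq3 : Y / (4 * E * beta_m K m) = Y * L / sw) by (rewrite Hbm; field; nra).
        set (u := / sw). assert (hu : sw * u = 1) by (unfold u; field; lra).
        assert (hu0 : 0 < u <= 1) by (unfold u; split; [apply Rinv_0_lt_compat; lra|]; 
          rewrite <- Rinv_1; apply Rinv_le_contravar; lra).
        assert (hq4 : Y * L / sw = Y * L * u) by reflexivity.
        set (bm := beta_m K m) in *.
        assert (hbmL : bm * L * E * 4 = sw) by lra.
        assert (hX : (E * Kr * (s + 1) / 2 + (D0 + bm)) * L > w).
        { eapply Rge_gt_trans; [|exact hc]. apply Rle_ge. apply Rmult_le_compat_r; [lra|]. fold s. lra. }
        assert (hYL : Y * L >= w - E * Kr * L / 2 - bm * L - bm * L * Ss).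
        { unfold Y. nra. }
        assert (hYLu : Y * L * u >= sw - E * Kr * L * u / 2 - bm * L * u - bm * L * Ss * u).
        { assert (w * u = sw) by (rewrite <- Hsww; nra). nra. }
        assert (hbLu : bm * L * u * (4 * E) = 1) by nra.
        assert (hbLu2 : bm * L * u <= 1 / 4) by nra.
        assert (hbLu3 : bm * L * Ss * u <= Ss / 4) by nra.
        assert (hEKLu : E * Kr * L * u <= E * Kr * L) by (assert (0 <= E*Kr*L) by nra; nra).
        assert (4 * E * bs * L >= 0) by nra.
        assert (E * Kr * L <= E * E * Kr * L) by nra.
        simpl. nra.
      * (* S case *)
        assert (hS1 : S_card d a b (beta_m K m) + (if Rle_dec (beta_m K m) (INR (d b)) then 1 else 0) > sw).
        { set (z := S_card d a b (beta_m K m) + _) in *.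
          assert (0 <= z) by (unfold z; pose proof (S_card_ge0 d a b (beta_m K m)); destruct Rle_dec; lra).
          nra. }
        assert ((if Rle_dec (beta_m K m) (INR (d b)) then 1 else 0) <= 1) by (destruct Rle_dec; lra).
        assert (4 * E * bs * L >= 0) by nra.
        simpl. nra.
Qed.
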